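(* Let $L$ be a metric flag triangulation of $\mathbb{S}^2$ which is not the boundary of a $3$-simplex, and let $s$ be a Euclidean vertex of $L$. (a) If $s$ is $3$-Euclidean, then the link $L_s$ and the star $\mathrm{St}_L(s)$ are full subcomplexes of $L$. (b) If $s$ is $4$-Euclidean and $L$ is not the suspension of a $3$-gon, then $L_s$ and $\mathrm{St}_L(s)$ are full subcomplexes of $L$.
   Context: A simplicial complex with edges labeled by integers $\ge 2$ is metric flag if it is the labeled nerve of a Coxeter system $(W,S)$: the vertex set is $S$, a nonempty subset $T\subseteq S$ spans a simplex iff the subgroup $W_T$ generated by $T$ is finite, and the edge $\{s,t\}$ is labeled $m_{st}$ (the order of $st$). A subcomplex is full if every simplex of $L$ whose vertices lie in the subcomplex belongs to it. For a vertex $s$: the star $\mathrm{St}_L(s)$ is the subcomplex of all closed simplices containing $s$; the link $L_s$ is the subcomplex of all closed simplices contained in simplices containing $s$ but not containing $s$; the valence of $s$ is the number of vertices of $L_s$. A vertex $s$ is $3$-Euclidean if it has valence $3$ and its link vertices $s_0,s_1,s_2$ satisfy $\pi/m_{s_0s_1}+\pi/m_{s_1s_2}+\pi/m_{s_2s_0}=\pi$; it is $4$-Euclidean if it has valence $4$ and its link is a $4$-cycle $s_0s_1s_2s_3$ with $m_{s_is_{i+1}}=2$ for all $i$ (mod $4$); it is Euclidean if it is $3$- or $4$-Euclidean. $L$ is the suspension of an $n$-gon if it is the simplicial join of two non-adjacent vertices (the suspension points) with an $n$-cycle. *)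

(* Defs.v *)
From HB Require Import structures.
From mathcomp Require Import all_boot all_order all_algebra.
Set Implicit Arguments. Unset Strict Implicit. Unset Printing Implicit Defensive.
Import GRing.Theory Num.Theory.

Section Defs.
Variable S : finType.

(* A Coxeter matrix on S; the value 0 encodes m_st = infinity. *)
Definition coxeter_matrix (M : S -> S -> nat) : Prop :=
  (forall s, M s s = 1%N) /\
  (forall s t, M s t = M t s) /\
  (forall s t, s != t -> M s t != 1%N).

(* Equality in the Coxeter group W = < S | (st)^{m_st} = 1 > on words over S:
   the congruence on seq S generated by the defining relations. *)
Inductive cox_eq (M : S -> S -> nat) : seq S -> seq S -> Prop :=
| cox_refl w : cox_eq M w w
| cox_sym u v : cox_eq M u v -> cox_eq M v u
| cox_trans u v w : cox_eq M u v -> cox_eq M v w -> cox_eq M u w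
| cox_ctx a u v b : cox_eq M u v -> cox_eq M (a ++ u ++ b) (a ++ v ++ b)
| cox_rel s t : M s t != 0%N ->
    cox_eq M (flatten (nseq (M s t) [:: s; t])) [::].

Definition WT_finite (M : S -> S -> nat) (T : {set S}) : Prop :=
  exists ws : seq (seq S),
    forall w : seq S, all (fun x => x \in T) w ->
      exists2 u, u \in ws & cox_eq M w u.

(* L (a set of simplices = nonempty vertex sets) is the nerve of (W,S);
   its edges {s,t} are labeled by M s t. *)
Definition is_nerve (M : S -> S -> nat) (L : {set {set S}}) : Prop :=
  forall T : {set S}, T \in L <-> (T != set0 /\ WT_finite M T).

Definition cvertices (K : {set {set S}}) : {set S} := [set v | [set v] \in K].

Definition full (L K : {set {set S}}) : Prop :=
  forall sigma, sigma \in L -> sigma \subset cvertices K -> sigma \in K.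

Definition star (L : {set {set S}}) (s : S) : {set {set S}} :=
  [set sigma in L | [exists tau in L, (s \in tau) && (sigma \subset tau)]].

Definition link (L : {set {set S}}) (s : S) : {set {set S}} :=
  [set sigma in L | (s \notin sigma) &&
                    [exists tau in L, (s \in tau) && (sigma \subset tau)]].

Definition valence (L : {set {set S}}) (s : S) : nat := #|cvertices (link L s)|.

Definition cycle_cx n (c : 'I_n -> S) : {set {set S}} :=
  [set [set c i] | i : 'I_n] :|: [set [set c i; c (ordS i)] | i : 'I_n].

Definition is_cycle_cx (K : {set {set S}}) : Prop :=
  exists n (c : 'I_n -> S), (3 <= n)%N /\ injective c /\ K = cycle_cx c.

(* pi/m with m = 0 encoding infinity (pi/infinity = 0), measured in units of pi *)
Definition piover (m : nat) : rat := ((m%:R)^-1)%R.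

Definition three_euclidean (M : S -> S -> nat) (L : {set {set S}}) (s : S) : Prop :=
  valence L s = 3%N /\
  exists s0 s1 s2, cvertices (link L s) = [set s0; s1; s2] /\
    (piover (M s0 s1) + piover (M s1 s2) + piover (M s2 s0) = 1)%R.

Definition four_euclidean (M : S -> S -> nat) (L : {set {set S}}) (s : S) : Prop :=
  valence L s = 4%N /\
  exists s0 s1 s2 s3, uniq [:: s0; s1; s2; s3] /\
    link L s = [set [set s0]; [set s1]; [set s2]; [set s3];
                    [set s0; s1]; [set s1; s2]; [set s2; s3]; [set s3; s0]] /\
    M s0 s1 = 2%N /\ M s1 s2 = 2%N /\ M s2 s3 = 2%N /\ M s3 s0 = 2%N.

Definition euclidean M L s : Prop := three_euclidean M L s \/ four_euclidean M L s.

(* L is the suspension (join with two non-adjacent vertices a, b) of an n-cycle *)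
Definition is_suspension_ngon (n : nat) (L : {set {set S}}) : Prop :=
  exists (a b : S) (c : 'I_n -> S),
    injective c /\ a != b /\ (forall i, c i != a) /\ (forall i, c i != b) /\
    L = [set [set a]; [set b]] :|: cycle_cx c
        :|: [set a |: sigma | sigma in cycle_cx c]
        :|: [set b |: sigma | sigma in cycle_cx c].

Definition is_boundary_3simplex (L : {set {set S}}) : Prop :=
  #|S| = 4%N /\ L = [set sigma : {set S} | (sigma != set0) && (sigma != setT)].

(* Combinatorial triangulation of the 2-sphere: a simplicial complex with
   vertex set S that is a closed combinatorial surface (every vertex link is a
   cycle), connected, with Euler characteristic 2. *)
Definition tri_S2 (L : {set {set S}}) : Prop :=
  (forall sigma, sigma \in L -> sigma != set0) /\
  (forall sigma tau : {set S}, sigma \in L -> tau \subset sigma -> tau != set0 -> tau \in L) /\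
  (forall v : S, [set v] \in L) /\
  (forall v : S, is_cycle_cx (link L v)) /\
  (forall x y : S, connect [rel u w | [set u; w] \in L] x y) /\
  (#|[set sigma in L | #|sigma| == 1%N]| + #|[set sigma in L | #|sigma| == 3%N]|
     = #|[set sigma in L | #|sigma| == 2%N]| + 2)%N.

End Defs.

(* Main.v *)
Require Import Defs.
From mathcomp Require Import all_boot all_order all_algebra.
Set Implicit Arguments. Unset Strict Implicit. Unset Printing Implicit Defensive.

Section Cyc.
Variable S : finType.

Lemma iter_ordS n (i : 'I_n) k : val (iter k (@ordS n) i) = (i + k) %% n.
Proof.
elim: k => [|k IH] /=; first by rewrite addn0 modn_small.
rewrite IH /= -addn1 modnDml. by rewrite -addnA addn1.
Qed.

Lemma ordS_surj n (i j : 'I_n) : exists k, iter k (@ordS n) i = j.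
Proof.
exists (j + n - i); apply: val_inj; rewrite iter_ordS addnBA; last first.
  by apply: leq_trans (ltnW (ltn_ord i)) (leq_addl _ _).
by rewrite addnC addnK modnDr modn_small.
Qed.

Lemma ordS_neq n (i : 'I_n) : 1 < n -> ordS i != i.
Proof.
move=> n1; apply/eqP=> /(congr1 val) /=.
case: (ltnP i.+1 n) => h; first by rewrite modn_small // => /eqP; rewrite eqn_leq ltnn.
have e : i.+1 = n by apply/eqP; rewrite eqn_leq h ltn_ord.
by rewrite e modnn => e0; move: e; rewrite -e0 => e1; move: n1; rewrite -e1.
Qed.

Lemma set2_eq (p q r t : S) : p != q -> [set p; q] = [set r; t] ->
  (p = r /\ q = t) \/ (p = t /\ q = r).
Proof.
move=> pq /setP E.
have := E p; have := E q; rewrite !inE !eqxx /= ?orbT => /esym hq /esym hp.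
case/orP: hp => /eqP hp; subst.
  by left; split=> //; case/orP: hq => /eqP // e; rewrite e eqxx in pq.
by right; split=> //; case/orP: hq => /eqP // e; rewrite e eqxx in pq.
Qed.

Variables (n : nat) (c : 'I_n -> S).
Hypothesis cinj : injective c.
Hypothesis n1 : 1 < n.

Lemma cyc_vert x : [set x] \in cycle_cx c -> exists i, x = c i.
Proof.
rewrite /cycle_cx inE => /orP[] /imsetP[i _ E].
  by exists i; apply/set1_inj.
have : c i \in [set x] by rewrite E !inE eqxx.
have : c (ordS i) \in [set x] by rewrite E !inE eqxx orbT.
rewrite !inE => /eqP e1 /eqP e2.
by have := ordS_neq i n1; rewrite (cinj (etrans e1 (esym e2))) eqxx.
Qed.

Lemma cyc_vert' i : [set c i] \in cycle_cx c.
Proof. by rewrite /cycle_cx inE; apply/orP; left; apply/imsetP; exists i. Qed.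

Lemma cyc_edge_vert a b : [set a; b] \in cycle_cx c -> exists i, a = c i.
Proof.
rewrite /cycle_cx inE => /orP[] /imsetP[i _ /setP E].
  by exists i; have := E a; rewrite !inE eqxx /= => /esym/eqP.
have := E a; rewrite !inE eqxx /= => /esym/orP[]/eqP ->; by eexists.
Qed.

Lemma cyc_nbr i y : [set c i; y] \in cycle_cx c -> y != c i ->
  y = c (ordS i) \/ y = c (ord_pred i).
Proof.
move=> + yc; rewrite /cycle_cx inE => /orP[] /imsetP[j _ E].
  move/setP: E => E'; have := E' y; have := E' (c i).
  rewrite !inE !eqxx orbT /= => /esym/eqP e1 /esym/eqP e2.
  by rewrite e2 -e1 eqxx in yc.
have yc' : c i != y by rewrite eq_sym.
have [[/cinj e1 e2]|[/cinj e1 e2]] := set2_eq (yc' : c i != y) E.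
  by left; rewrite e1.
by right; rewrite e2 e1 ordSK.
Qed.

Lemma cyc_card sigma : sigma \in cycle_cx c -> #|sigma| <= 2.
Proof.
rewrite /cycle_cx inE => /orP[] /imsetP[i _ ->]; first by rewrite cards1.
by rewrite cards2; case: (_ != _).
Qed.

Lemma cyc_closed (A : {set S}) a0 :
  a0 \in A ->
  (forall a, a \in A -> exists b b', [/\ b \in A, b' \in A, b != b', b != a & b' != a]
     /\ [set a; b] \in cycle_cx c /\ [set a; b'] \in cycle_cx c) ->
  forall x, [set x] \in cycle_cx c -> x \in A.
Proof.
move=> a0A H.
have [b [b' [_ [e0 _]]]] := H a0 a0A.
have [i0 ei0] := cyc_edge_vert e0.
have Hi0 : c i0 \in A by rewrite -ei0.
move=> x /cyc_vert [j ->].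
have step i : c i \in A -> c (ordS i) \in A.
  move=> ciA; have [b1 [b2 [[b1A b2A b12 b1i b2i] [eb1 eb2]]]] := H _ ciA.
  have [h1|h1] := cyc_nbr eb1 b1i; first by rewrite -h1.
  have [h2|h2] := cyc_nbr eb2 b2i; first by rewrite -h2.
  by rewrite h1 h2 eqxx in b12.
have [k <-] := ordS_surj i0 j.
by elim: k => [|k IH] //=; apply: step.
Qed.

End Cyc.

Section Cox.
Variables (S : finType) (M : S -> S -> nat).

Lemma cox_catl a u v : cox_eq M u v -> cox_eq M (a ++ u) (a ++ v).
Proof. by move=> h; have := cox_ctx a [::] h; rewrite !cats0. Qed.
Lemma cox_catr u v b : cox_eq M u v -> cox_eq M (u ++ b) (v ++ b).
Proof. by move=> h; apply: (cox_ctx [::] b h). Qed.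
Lemma cox_cons x u v : cox_eq M u v -> cox_eq M (x :: u) (x :: v).
Proof. exact: (cox_catl [:: x]). Qed.

Lemma cox_sq x : M x x = 1%N -> cox_eq M [:: x; x] [::].
Proof. by move=> h; have := @cox_rel _ M x x; rewrite h => /(_ isT). Qed.

Lemma cox_comm t x : M t t = 1%N -> M x x = 1%N -> M t x = 2%N ->
  cox_eq M [:: t; x] [:: x; t].
Proof.
move=> ht hx htx; apply: cox_sym.
have r : cox_eq M [:: t; x; t; x] [::].
  by have := @cox_rel _ M t x; rewrite htx => /(_ isT).
apply: (@cox_trans _ _ _ [:: t; t; x; t]).
  by have := cox_catr [:: x; t] (cox_sym (cox_sq ht)).
apply: (@cox_trans _ _ _ [:: t; t; x; t; x; x]).
  by have := cox_catl [:: t; t; x; t] (cox_sym (cox_sq hx)).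
by have := cox_ctx [:: t] [:: x] r.
Qed.

Lemma cox_commw t u : (forall x, x \in u -> cox_eq M [:: t; x] [:: x; t]) ->
  cox_eq M (t :: u) (u ++ [:: t]).
Proof.
elim: u => [|x u IH] H //=; first exact: cox_refl.
apply: (@cox_trans _ _ _ (x :: t :: u)).
  by have := cox_catr u (H x (mem_head _ _)).
apply: cox_cons; apply: IH => y yu; apply: H; by rewrite inE yu orbT.
Qed.

Lemma WT_add t (T : {set S}) : coxeter_matrix M -> t \notin T ->
  (forall x, x \in T -> M t x = 2%N) -> WT_finite M T -> WT_finite M (t |: T).
Proof.
move=> [h1 [hs _]] tT h2 [ws Hws].
exists (ws ++ [seq u ++ [:: t] | u <- ws]) => w.
have key : all (fun x => x \in t |: T) w -> exists w' (b : bool),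
   all (fun x => x \in T) w' /\ cox_eq M w (w' ++ nseq b t).
  elim: w => [|x w IH] /=.
    by move=> _; exists [::], false; split=> //; apply: cox_refl.
  case/andP=> xT /IH [w' [b [aw' e]]].
  have e1 := cox_cons x e.
  case: (eqVneq x t) => [xt|xnt].
    subst x.
    have e2 : cox_eq M (t :: w' ++ nseq b t) (w' ++ t :: nseq b t).
      have hc : cox_eq M (t :: w') (w' ++ [:: t]).
        apply: cox_commw => y yw; have yT : y \in T by move/allP: aw'; apply.
        by apply: cox_comm => //; apply: h2.
      by have := cox_catr (nseq b t) hc; rewrite -catA.
    clear e; case: b e1 e2 => /= e1 e2.
      exists w', false; split=> //; rewrite cats0.
      apply: (cox_trans e1); apply: (cox_trans e2).
      have := cox_catl w' (cox_sq (h1 t)). rewrite cats0. exact.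
    by exists w', true; split=> //; apply: cox_trans e1 e2.
  exists (x :: w'), b; split => //=.
  by rewrite aw' andbT; move: xT; rewrite !inE (negbTE xnt).
move=> /key [w' [b [aw' e]]].
have [u uws eu] := Hws _ aw'.
exists (u ++ nseq b t); last by apply: cox_trans e (cox_catr _ eu).
rewrite mem_cat; case: b {e} => /=.
  by apply/orP; right; apply/mapP; exists u.
by rewrite cats0 uws.
Qed.
End Cox.

Section Simp.
Variables (S : finType) (L : {set {set S}}).
Hypothesis HL1 : forall sigma, sigma \in L -> sigma != set0.
Hypothesis HL2 : forall sigma tau : {set S}, sigma \in L -> tau \subset sigma -> tau != set0 -> tau \in L.
Hypothesis HL3 : forall v : S, [set v] \in L.
Hypothesis HL4 : forall v : S, is_cycle_cx (link L v).

Lemma mem_link v sigma : (sigma \in link L v) = [&& sigma \in L, v \notin sigma & v |: sigma \in L].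
Proof.
rewrite /link inE; apply/andP/and3P => [[sL /andP[vs /exists_inP[tau tL /andP[vt st]]]]|[sL vs vsL]].
  split=> //; apply: (HL2 tL); last by apply/set0Pn; exists v; rewrite setU11.
  by rewrite subUset sub1set vt.
split=> //; rewrite vs; apply/exists_inP; exists (v |: sigma) => //.
by rewrite setU11 subsetU1.
Qed.

Lemma link1 v w : ([set w] \in link L v) = (w != v) && ([set v; w] \in L).
Proof. by rewrite mem_link HL3 inE eq_sym. Qed.

Lemma link2 v a b : v != a -> v != b -> ([set a; b] \in link L v) = ([set v; a; b] \in L).
Proof.
move=> va vb; rewrite mem_link.
have -> : v \notin [set a; b] by rewrite !inE negb_or va vb.
rewrite setUA.
apply/andP/idP => [[_ /andP[_ h]]|h]; first exact: h.
split; last by rewrite /= h.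
apply: (HL2 h); first by rewrite -setUA subsetU1.
by apply/set0Pn; exists a; rewrite !inE eqxx.
Qed.

Lemma nbr_closed v (A : {set S}) a0 : a0 \in A -> v \notin A ->
  (forall a, a \in A -> exists b b', [/\ b \in A, b' \in A, b != b', b != a & b' != a]
     /\ [set v; a; b] \in L /\ [set v; a; b'] \in L) ->
  forall w, [set v; w] \in L -> w != v -> w \in A.
Proof.
move=> a0A vA H w vw wv.
have [n [c [n3 [ci E]]]] := HL4 v.
have n1 : 1 < n by apply: leq_trans n3.
apply: (cyc_closed ci n1 a0A); last by rewrite -E link1 wv.
move=> a aA; have [b [b' [[bA b'A bb ba b'a] [e1 e2]]]] := H a aA.
have vnA x : x \in A -> v != x by move=> xA; apply/eqP=> e; rewrite e xA in vA.
exists b, b'; split; first by [].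
by rewrite -E !link2 ?vnA.
Qed.

Lemma conn_all (V : {set S}) x : x \in V ->
  (forall v w, v \in V -> [set v; w] \in L -> w \in V) ->
  (forall x y : S, connect [rel u w | [set u; w] \in L] x y) ->
  forall y, y \in V.
Proof.
move=> xV H HC y; have /connectP[p pp ->] := HC x y.
by elim: p x xV pp => //= z p IH x xV /andP[e pp]; apply: (IH z) => //; apply: H e.
Qed.

Lemma full_star s : full L (link L s) -> full L (star L s).
Proof.
move=> F sigma sL sub.
case: (boolP (s \in sigma)) => ss.
  by rewrite /star inE sL; apply/exists_inP; exists sigma; rewrite ?ss ?subxx.
have : sigma \in link L s.
  apply: F => //; apply/subsetP=> x xs; rewrite /cvertices inE.
  move/subsetP: sub => /(_ x xs); rewrite /cvertices !inE.
  case/andP=> xL /exists_inP[tau tL /andP[st xt]].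
  rewrite xL /=; apply/andP; split.
    by apply: contra ss => /eqP ->.
  by apply/exists_inP; exists tau => //; rewrite st.
rewrite /link /star !inE => /andP[-> /andP[_ ->]]; by [].
Qed.

End Simp.

Ltac dist := rewrite ?inE ?eqxx /=;
  repeat (match goal with
  | H : is_true (?a != ?b) |- context[?a == ?b] => rewrite (negbTE H)
  | H : is_true (?a != ?b) |- context[?b == ?a] => rewrite [b == a]eq_sym (negbTE H)
  end); rewrite /= ?orbT ?orbF ?andbT ?andbF.

Ltac setperm := apply/setP => ?; rewrite !inE; do ![case: (_ == _)]; by [].

Lemma cvert_cyc (S : finType) n (c : 'I_n -> S) : injective c -> 1 < n ->
  cvertices (cycle_cx c) = [set c i | i in 'I_n].
Proof.
move=> ci n1; apply/setP=> x; rewrite /cvertices inE.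
apply/idP/imsetP => [/(cyc_vert ci n1) [i ->]|[i _ ->]]; first by exists i.
exact: cyc_vert'.
Qed.

Lemma notT_ex (S : finType) (sigma : {set S}) : sigma != setT -> exists y, y \notin sigma.
Proof.
move=> h; case: (pickP (fun y => y \notin sigma)) => [y yn|all]; first by exists y.
suff e : sigma = setT by rewrite e eqxx in h.
by apply/setP=> y; rewrite inE; move: (all y) => /= /negbFE.
Qed.

Lemma sub_drop (S : finType) (sigma : {set S}) a b c d :
  (forall x, x \in [set a; b; c; d]) -> d \notin sigma -> sigma \subset [set a; b; c].
Proof.
move=> all an; apply/subsetP=> x xs; have := all x; rewrite [x \in _]inE.
case/orP=> [//|]; rewrite inE => /eqP e; by rewrite -e xs in an.
Qed.

Section Three.
Variables (S : finType) (L : {set {set S}}) (s : S).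
Hypothesis HL : tri_S2 L.
Hypothesis nB : ~ is_boundary_3simplex L.
Hypothesis val3 : valence L s = 3%N.

Lemma three_full : full L (link L s).
Proof.
have [HL1 [HL2 [HL3 [HL4 [HL5 _]]]]] := HL.
have [n [c [n3 [ci E]]]] := HL4 s.
have n1 : 1 < n by apply: leq_trans n3.
have en : n = 3%N.
  by move: val3; rewrite /valence E cvert_cyc // card_imset // card_ord.
subst n.
pose i0 : 'I_3 := @Ordinal 3 0 isT.
pose i1 : 'I_3 := @Ordinal 3 1 isT.
pose i2 : 'I_3 := @Ordinal 3 2 isT.
set s0 := c i0; set s1 := c i1; set s2 := c i2.
have ord3 (i : 'I_3) : i = i0 \/ i = i1 \/ i = i2.
  case: i => [[|[|[|k]]] kl]; try (by [left; apply: val_inj|right;left; apply: val_inj|right;right; apply: val_inj]).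
have CV : cvertices (link L s) = [set s0; s1; s2].
  rewrite E cvert_cyc //; apply/setP=> x; rewrite !inE; apply/imsetP/idP.
    by case=> i _ ->; case: (ord3 i) => [->|[->|->]]; rewrite eqxx ?orbT.
  by case/orP=> [/orP[]|] /eqP ->; eexists.
have d01 : s0 != s1 by apply/eqP=> /ci.
have d12 : s1 != s2 by apply/eqP=> /ci.
have d02 : s0 != s2 by apply/eqP=> /ci.
have edge (i : 'I_3) : [set c i; c (ordS i)] \in link L s.
  by rewrite E /cycle_cx inE; apply/orP; right; apply/imsetP; exists i.
have e01 : [set s0; s1] \in link L s.
  by have := edge i0; rewrite (_ : ordS i0 = i1) //; apply: val_inj.
have e12 : [set s1; s2] \in link L s.
  by have := edge i1; rewrite (_ : ordS i1 = i2) //; apply: val_inj.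
have e20 : [set s2; s0] \in link L s.
  by have := edge i2; rewrite (_ : ordS i2 = i0) //; apply: val_inj.
have sV x : x \in [set s0; s1; s2] -> s != x.
  move=> xi; rewrite -CV /cvertices inE (link1 HL2 HL3) in xi.
  by rewrite eq_sym; case/andP: xi.
have ss0 : s != s0 by apply: sV; rewrite !inE eqxx ?orbT.
have ss1 : s != s1 by apply: sV; rewrite !inE eqxx ?orbT.
have ss2 : s != s2 by apply: sV; rewrite !inE eqxx ?orbT.
have t01 : [set s; s0; s1] \in L by rewrite -(link2 HL2).
have t12 : [set s; s1; s2] \in L by rewrite -(link2 HL2).
have t20 : [set s; s2; s0] \in L by rewrite -(link2 HL2).
move=> sigma sL; rewrite CV => sub.
have sns : s \notin sigma.
  by apply/negP=> /(subsetP sub) /sV; rewrite eqxx.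
have viaP (P : {set S}) : sigma \subset P -> s |: P \in L -> sigma \in link L s.
  move=> sP PL; rewrite (mem_link HL2) sL sns /=; apply: (HL2 _ _ PL); first by apply: setUS.
  by apply/set0Pn; exists s; rewrite setU11.
case: (boolP (s0 \in sigma)) => h0; last first.
  apply: (viaP [set s1; s2]); last by rewrite setUA. apply/subsetP=> x xs; move: (subsetP sub x xs).
  rewrite !inE => /orP[/orP[]|] /eqP e; subst x; rewrite ?eqxx ?orbT //.
  by rewrite xs in h0.
case: (boolP (s1 \in sigma)) => h1; last first.
  apply: (viaP [set s2; s0]); last by rewrite setUA. apply/subsetP=> x xs; move: (subsetP sub x xs).
  rewrite !inE => /orP[/orP[]|] /eqP e; subst x; rewrite ?eqxx ?orbT //.
  by rewrite xs in h1.
case: (boolP (s2 \in sigma)) => h2; last first.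
  apply: (viaP [set s0; s1]); last by rewrite setUA. apply/subsetP=> x xs; move: (subsetP sub x xs).
  rewrite !inE => /orP[/orP[]|] /eqP e; subst x; rewrite ?eqxx ?orbT //.
  by rewrite xs in h2.
(* the triangle s0 s1 s2 is in L: L is the boundary of a 3-simplex *)
exfalso; apply: nB.
have T : [set s0; s1; s2] \in L.
  apply: (HL2 _ _ sL); first by apply/subsetP=> x; rewrite !inE => /orP[/orP[]|] /eqP ->.
  by apply/set0Pn; exists s0; rewrite !inE eqxx.
set V := [set s; s0; s1; s2].
have clos v w : v \in V -> [set v; w] \in L -> w \in V.
  rewrite !inE => vV vwL; case: (eqVneq w v) => [-> //|wv].
  move: vV => /orP[/orP[/orP[]|]|] /eqP ev; subst v.
  - have : w \in cvertices (link L s) by rewrite inE (link1 HL2 HL3) wv.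
    by rewrite CV !inE => /orP[/orP[]|] ->; rewrite ?orbT.
  - have : w \in [set s; s1; s2].
      apply: (nbr_closed HL2 HL3 HL4 (a0 := s) _ _ _ vwL wv); first by rewrite !inE eqxx.
        by dist.
      move=> a; rewrite !inE => /orP[/orP[]|] /eqP ->.
      + exists s1, s2; split; first by dist.
        by split; [rewrite (_ : [set s0; s; s1] = [set s; s0; s1]) //|
                   rewrite (_ : [set s0; s; s2] = [set s; s2; s0]) //]; setperm.
      + exists s, s2; split; first by dist.
        by split; [rewrite (_ : [set s0; s1; s] = [set s; s0; s1]) //|exact: T]; setperm.
      + exists s, s1; split; first by dist.
        by split; [rewrite (_ : [set s0; s2; s] = [set s; s2; s0]) //|
                   rewrite (_ : [set s0; s2; s1] = [set s0; s1; s2]) //]; setperm.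
    by rewrite !inE => /orP[/orP[]|] ->; rewrite ?orbT.
  - have : w \in [set s; s0; s2].
      apply: (nbr_closed HL2 HL3 HL4 (a0 := s) _ _ _ vwL wv); first by rewrite !inE eqxx.
        by dist.
      move=> a; rewrite !inE => /orP[/orP[]|] /eqP ->.
      + exists s0, s2; split; first by dist.
        by split; [rewrite (_ : [set s1; s; s0] = [set s; s0; s1]) //|
                   rewrite (_ : [set s1; s; s2] = [set s; s1; s2]) //]; setperm.
      + exists s, s2; split; first by dist.
        by split; [rewrite (_ : [set s1; s0; s] = [set s; s0; s1]) //|
                   rewrite (_ : [set s1; s0; s2] = [set s0; s1; s2]) //]; setperm.
      + exists s, s0; split; first by dist.
        by split; [rewrite (_ : [set s1; s2; s] = [set s; s1; s2]) //|
                   rewrite (_ : [set s1; s2; s0] = [set s0; s1; s2]) //]; setperm.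
    by rewrite !inE => /orP[/orP[]|] ->; rewrite ?orbT.
  - have : w \in [set s; s0; s1].
      apply: (nbr_closed HL2 HL3 HL4 (a0 := s) _ _ _ vwL wv); first by rewrite !inE eqxx.
        by dist.
      move=> a; rewrite !inE => /orP[/orP[]|] /eqP ->.
      + exists s0, s1; split; first by dist.
        by split; [rewrite (_ : [set s2; s; s0] = [set s; s2; s0]) //|
                   rewrite (_ : [set s2; s; s1] = [set s; s1; s2]) //]; setperm.
      + exists s, s1; split; first by dist.
        by split; [rewrite (_ : [set s2; s0; s] = [set s; s2; s0]) //|
                   rewrite (_ : [set s2; s0; s1] = [set s0; s1; s2]) //]; setperm.
      + exists s, s0; split; first by dist.
        by split; [rewrite (_ : [set s2; s1; s] = [set s; s1; s2]) //|
                   rewrite (_ : [set s2; s1; s0] = [set s0; s1; s2]) //]; setperm.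
    by rewrite !inE => /orP[/orP[]|] ->; rewrite ?orbT.
have allV : forall y, y \in V.
  move=> y; apply: (conn_all (V:=V) (x:=s) _ clos HL5); by rewrite /V !inE eqxx.
have allV' (a b e d : S) : [set a; b; e; d] = V -> forall x, x \in [set a; b; e; d].
  by move=> ->.
split.
  rewrite -cardsT (_ : [set: S] = V); last by apply/setP=> y; rewrite inE allV.
  rewrite (_ : V = s |: (s0 |: (s1 |: [set s2]))); last by setperm.
  by rewrite !cardsU1 cards1; dist.
apply/setP=> sig; rewrite inE; apply/idP/idP.
  move=> sigL; rewrite HL1 //=; apply/eqP=> e; subst sig.
  have : [set s0; s1; s2] \in link L s.
    rewrite (mem_link HL2) T; dist.
    rewrite (_ : s |: _ = setT) //; apply/setP=> y; rewrite inE.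
    by move: (allV y); rewrite /V; dist; rewrite -!orbA.
  rewrite E => /cyc_card; rewrite (_ : [set s0; s1; s2] = s0 |: (s1 |: [set s2])); last by setperm.
  by rewrite !cardsU1 cards1; dist.
case/andP=> ne nT; have [y yn] := notT_ex nT.
have : y \in V by [].
rewrite /V !inE => /orP[/orP[/orP[]|]|] /eqP ey; subst y.
- apply: (HL2 _ _ T) => //; apply: (sub_drop (d := s)) => //.
  by apply: allV'; setperm.
- apply: (HL2 _ _ t12) => //; apply: (sub_drop (d := s0)) => //.
  by apply: allV'; setperm.
- apply: (HL2 _ _ t20) => //; apply: (sub_drop (d := s1)) => //.
  by apply: allV'; setperm.
- apply: (HL2 _ _ t01) => //; apply: (sub_drop (d := s2)) => //.
Qed.
End Three.

Ltac ne := apply/set0Pn; match goal with |- context[ [set ?x] ] => exists x end;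
  by rewrite !inE eqxx ?orbT.
Ltac subset_taut := apply/subsetP => ?; rewrite !inE; do ![case: (_ == _)]; by [].
Ltac subtri H t := apply: (H _ _ t); [subset_taut | ne].
Ltac inL6 H x1 x2 x3 x4 x5 x6 :=
  first [subtri H x1 | subtri H x2 | subtri H x3 | subtri H x4 | subtri H x5 | subtri H x6].

Lemma ord3 (i : 'I_3) :
  i = @Ordinal 3 0 isT \/ i = @Ordinal 3 1 isT \/ i = @Ordinal 3 2 isT.
Proof.
case: i => [[|[|[|k]]] kl]; try (by [left; apply: val_inj|right;left; apply: val_inj|right;right; apply: val_inj]).
Qed.

Lemma cyc3 (S : finType) (x y z : S) :
  cycle_cx (fun i : 'I_3 => nth x [:: x; y; z] i) =
  [set [set x]; [set y]; [set z]; [set x; y]; [set y; z]; [set z; x]].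
Proof.
pose i0 : 'I_3 := @Ordinal 3 0 isT.
pose i1 : 'I_3 := @Ordinal 3 1 isT.
pose i2 : 'I_3 := @Ordinal 3 2 isT.
have e0 : ordS i0 = i1 by apply: val_inj.
have e1 : ordS i1 = i2 by apply: val_inj.
have e2 : ordS i2 = i0 by apply: val_inj.
apply/setP=> sig; rewrite /cycle_cx !inE; apply/orP/idP.
  case=> /imsetP[i _ ->]; case: (ord3 i) => [->|[->|->]]; rewrite ?e0 ?e1 ?e2 /= eqxx ?orbT //.
move=> /orP[/orP[/orP[/orP[/orP[]|]|]|]|] /eqP ->.
- by left; apply/imsetP; exists i0.
- by left; apply/imsetP; exists i1.
- by left; apply/imsetP; exists i2.
- by right; apply/imsetP; exists i0; rewrite // e0.
- by right; apply/imsetP; exists i1; rewrite // e1.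
- by right; apply/imsetP; exists i2; rewrite // e2.
Qed.

Lemma set1_eq2 (S : finType) (x a b : S) : [set x] = [set a; b] -> a = b.
Proof.
move=> E.
have : a \in [set x] by rewrite E !inE eqxx.
have : b \in [set x] by rewrite E !inE eqxx orbT.
by rewrite !inE => /eqP -> /eqP ->.
Qed.

Lemma sub3 (S : finType) (x y z : S) (tau : {set S}) :
  tau \subset [set x; y; z] -> tau != set0 -> ~~ ([set x; y; z] \subset tau) ->
  tau \in [set [set x]; [set y]; [set z]; [set x; y]; [set y; z]; [set z; x]].
Proof.
move=> sub ne nT.
have key (X : {set S}) : (forall w, (w \in X) = (w \in tau)) -> X \in
   [set [set x]; [set y]; [set z]; [set x; y]; [set y; z]; [set z; x]] ->
   tau \in [set [set x]; [set y]; [set z]; [set x; y]; [set y; z]; [set z; x]].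
  by move=> h; rewrite (_ : tau = X) //; apply/setP=> w; rewrite h.
have memt w : w \in tau -> [|| w == x, w == y | w == z].
  by move/(subsetP sub); rewrite !inE -orbA.
case hx : (x \in tau); case hy : (y \in tau); case hz : (z \in tau).
- by move: nT; rewrite (_ : _ \subset _) //; apply/subsetP=> w; rewrite !inE => /orP[/orP[]|] /eqP ->.
- apply: (key [set x; y]); last by rewrite !inE eqxx ?orbT.
  move=> w; rewrite !inE; apply/idP/idP; [move=> /orP[]/eqP ->; by rewrite ?hx ?hy ?hz|
   move=> /[dup] wt /memt /or3P[]/eqP e; rewrite -?e ?eqxx ?orbT //; by rewrite e hz in wt].
- apply: (key [set z; x]); last by rewrite !inE eqxx ?orbT.
  move=> w; rewrite !inE; apply/idP/idP; [move=> /orP[]/eqP ->; by rewrite ?hx ?hy ?hz|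
   move=> /[dup] wt /memt /or3P[]/eqP e; rewrite -?e ?eqxx ?orbT //; by rewrite e hy in wt].
- apply: (key [set x]); last by rewrite !inE eqxx ?orbT.
  move=> w; rewrite !inE; apply/idP/idP; [move=> /eqP ->; by rewrite ?hx ?hy ?hz|
   move=> /[dup] wt /memt /or3P[]/eqP e; rewrite -?e ?eqxx ?orbT //; by rewrite e ?hy ?hz in wt].
- apply: (key [set y; z]); last by rewrite !inE eqxx ?orbT.
  move=> w; rewrite !inE; apply/idP/idP; [move=> /orP[]/eqP ->; by rewrite ?hx ?hy ?hz|
   move=> /[dup] wt /memt /or3P[]/eqP e; rewrite -?e ?eqxx ?orbT //; by rewrite e hx in wt].
- apply: (key [set y]); last by rewrite !inE eqxx ?orbT.
  move=> w; rewrite !inE; apply/idP/idP; [move=> /eqP ->; by rewrite ?hx ?hy ?hz|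
   move=> /[dup] wt /memt /or3P[]/eqP e; rewrite -?e ?eqxx ?orbT //; by rewrite e ?hx ?hz in wt].
- apply: (key [set z]); last by rewrite !inE eqxx ?orbT.
  move=> w; rewrite !inE; apply/idP/idP; [move=> /eqP ->; by rewrite ?hx ?hy ?hz|
   move=> /[dup] wt /memt /or3P[]/eqP e; rewrite -?e ?eqxx ?orbT //; by rewrite e ?hx ?hy in wt].
- case/set0Pn: ne => w /[dup] wt /memt /or3P[]/eqP e; by rewrite e ?hx ?hy ?hz in wt.
Qed.

Lemma uniq4 (S : eqType) (a b c d : S) : uniq [:: a;b;c;d] ->
  [/\ a != b, a != c, a != d, b != c & (b != d /\ c != d)].
Proof. by rewrite /= !inE !negb_or => /and4P[/and3P[-> -> ->] /andP[-> ->] -> _]. Qed.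

Section Four.
Variables (S : finType) (M : S -> S -> nat) (L : {set {set S}}) (s a0 a1 a2 a3 : S).
Hypothesis HM : coxeter_matrix M.
Hypothesis HN : is_nerve M L.
Hypothesis HL : tri_S2 L.
Hypothesis nS : ~ is_suspension_ngon 3 L.
Hypothesis U : uniq [:: a0; a1; a2; a3].
Hypothesis HE : link L s = [set [set a0]; [set a1]; [set a2]; [set a3];
                    [set a0; a1]; [set a1; a2]; [set a2; a3]; [set a3; a0]].
Hypotheses (m01 : M a0 a1 = 2%N) (m12 : M a1 a2 = 2%N) (m23 : M a2 a3 = 2%N) (m30 : M a3 a0 = 2%N).

Lemma four_core : [set a0; a2] \notin L.
Proof.
apply/negP => D.
have [HL1 [HL2 [HL3 [HL4 [HL5 _]]]]] := HL.
have [Mdiag [Msym _]] := HM.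
have [d01 d02 d03 d12 [d13 d23]] := uniq4 U.
have inHE (x : {set S}) : x \in [set [set a0]; [set a1]; [set a2]; [set a3];
                    [set a0; a1]; [set a1; a2]; [set a2; a3]; [set a3; a0]] -> x \in link L s.
  by rewrite HE.
have sa (a : S) : [set a] \in link L s -> s != a.
  by rewrite (link1 HL2 HL3) eq_sym => /andP[].
have ss0 : s != a0 by apply: sa; apply: inHE; rewrite !inE eqxx ?orbT.
have ss1 : s != a1 by apply: sa; apply: inHE; rewrite !inE eqxx ?orbT.
have ss2 : s != a2 by apply: sa; apply: inHE; rewrite !inE eqxx ?orbT.
have ss3 : s != a3 by apply: sa; apply: inHE; rewrite !inE eqxx ?orbT.
have t01 : [set s; a0; a1] \in L.
  by rewrite -(link2 HL2 ss0 ss1); apply: inHE; rewrite !inE eqxx ?orbT.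
have t12 : [set s; a1; a2] \in L.
  by rewrite -(link2 HL2 ss1 ss2); apply: inHE; rewrite !inE eqxx ?orbT.
have t23 : [set s; a2; a3] \in L.
  by rewrite -(link2 HL2 ss2 ss3); apply: inHE; rewrite !inE eqxx ?orbT.
have t30 : [set s; a3; a0] \in L.
  by rewrite -(link2 HL2 ss3 ss0); apply: inHE; rewrite !inE eqxx ?orbT.
have W02 : WT_finite M [set a0; a2] by have [] := (HN _).1 D.
have T1 : a1 |: [set a0; a2] \in L.
  apply/(HN _).2; split; first by ne.
  apply: WT_add => //; first by dist.
  by move=> x; rewrite !inE => /orP[]/eqP ->; [rewrite Msym|].
have T2 : a3 |: [set a0; a2] \in L.
  apply/(HN _).2; split; first by ne.
  apply: WT_add => //; first by dist.
  by move=> x; rewrite !inE => /orP[]/eqP ->; [|rewrite Msym].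
have nb_s w : [set s; w] \in L -> w != s -> w \in [set a0; a1; a2; a3].
  move=> swL ws; have : [set w] \in link L s by rewrite (link1 HL2 HL3) ws.
  rewrite HE !inE => /orP[/orP[/orP[/orP[/orP[/orP[/orP[]|]|]|]|]|]|] /eqP.
  1-4: by move/set1_inj ->; rewrite eqxx ?orbT.
  1-4: by move/set1_eq2/eqP; dist.
have nb0 w : [set a0; w] \in L -> w != a0 -> w \in [set s; a1; a2; a3].
  apply: (nbr_closed HL2 HL3 HL4 (a0 := s)); first by rewrite !inE eqxx ?orbT.
    by dist.
  move=> a; rewrite !inE => /orP[/orP[/orP[]|]|] /eqP ->.
  + by exists a1, a3; split; [split; dist | split; inL6 HL2 t01 t12 t23 t30 T1 T2].
  + by exists s, a2; split; [split; dist | split; inL6 HL2 t01 t12 t23 t30 T1 T2].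
  + by exists a1, a3; split; [split; dist | split; inL6 HL2 t01 t12 t23 t30 T1 T2].
  + by exists s, a2; split; [split; dist | split; inL6 HL2 t01 t12 t23 t30 T1 T2].
have nb2 w : [set a2; w] \in L -> w != a2 -> w \in [set s; a1; a0; a3].
  apply: (nbr_closed HL2 HL3 HL4 (a0 := s)); first by rewrite !inE eqxx ?orbT.
    by dist.
  move=> a; rewrite !inE => /orP[/orP[/orP[]|]|] /eqP ->.
  + by exists a1, a3; split; [split; dist | split; inL6 HL2 t01 t12 t23 t30 T1 T2].
  + by exists s, a0; split; [split; dist | split; inL6 HL2 t01 t12 t23 t30 T1 T2].
  + by exists a1, a3; split; [split; dist | split; inL6 HL2 t01 t12 t23 t30 T1 T2].
  + by exists s, a0; split; [split; dist | split; inL6 HL2 t01 t12 t23 t30 T1 T2].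
have nb1 w : [set a1; w] \in L -> w != a1 -> w \in [set s; a0; a2].
  apply: (nbr_closed HL2 HL3 HL4 (a0 := s)); first by rewrite !inE eqxx ?orbT.
    by dist.
  move=> a; rewrite !inE => /orP[/orP[]|] /eqP ->.
  + by exists a0, a2; split; [split; dist | split; inL6 HL2 t01 t12 t23 t30 T1 T2].
  + by exists s, a2; split; [split; dist | split; inL6 HL2 t01 t12 t23 t30 T1 T2].
  + by exists s, a0; split; [split; dist | split; inL6 HL2 t01 t12 t23 t30 T1 T2].
have nb3 w : [set a3; w] \in L -> w != a3 -> w \in [set s; a0; a2].
  apply: (nbr_closed HL2 HL3 HL4 (a0 := s)); first by rewrite !inE eqxx ?orbT.
    by dist.
  move=> a; rewrite !inE => /orP[/orP[]|] /eqP ->.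
  + by exists a0, a2; split; [split; dist | split; inL6 HL2 t01 t12 t23 t30 T1 T2].
  + by exists s, a2; split; [split; dist | split; inL6 HL2 t01 t12 t23 t30 T1 T2].
  + by exists s, a0; split; [split; dist | split; inL6 HL2 t01 t12 t23 t30 T1 T2].
set V := [set s; a0; a1; a2; a3].
have clos v w : v \in V -> [set v; w] \in L -> w \in V.
  rewrite /V !inE => vV vwL; case: (eqVneq w v) => [-> //|wv].
  move: vV => /orP[/orP[/orP[/orP[]|]|]|] /eqP ev; subst v.
  - by move: (nb_s w vwL wv); rewrite !inE => /orP[/orP[/orP[]|]|] ->; rewrite ?orbT.
  - by move: (nb0 w vwL wv); rewrite !inE => /orP[/orP[/orP[]|]|] ->; rewrite ?orbT.
  - by move: (nb1 w vwL wv); rewrite !inE => /orP[/orP[]|] ->; rewrite ?orbT.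
  - by move: (nb2 w vwL wv); rewrite !inE => /orP[/orP[/orP[]|]|] ->; rewrite ?orbT.
  - by move: (nb3 w vwL wv); rewrite !inE => /orP[/orP[]|] ->; rewrite ?orbT.
have allV y : y \in V.
  by apply: (conn_all (V:=V) (x:=s) _ clos HL5); rewrite /V !inE eqxx.
have n13 : [set a1; a3] \notin L.
  apply/negP => h; have h' : a3 != a1 by rewrite eq_sym.
  by move: (nb1 _ h h'); dist.
have nS02 : [set s; a0; a2] \notin L.
  apply/negP => h; have : [set a0; a2] \in link L s by rewrite (link2 HL2 ss0 ss2).
  rewrite HE !inE => /orP[/orP[/orP[/orP[/orP[/orP[/orP[]|]|]|]|]|]|] /eqP E.
  1-4: by move: (set1_eq2 (esym E)) => /eqP; dist.
  1-4: by have [[e1 e2]|[e1 e2]] := set2_eq d02 E; move: e1 e2 => /eqP + /eqP; dist.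
apply: nS.
pose c := fun i : 'I_3 => nth s [:: s; a0; a2] i.
have cycE : cycle_cx c = [set [set s]; [set a0]; [set a2]; [set s; a0]; [set a0; a2]; [set a2; s]].
  by rewrite /c cyc3.
exists a1, a3, c.
have ci : injective c.
  move=> i j; case: (ord3 i) => [->|[->|->]]; case: (ord3 j) => [->|[->|->]] => e;
  try (by apply: val_inj); by move: e => /= /eqP; dist.
split; first exact: ci.
split; first by dist.
split; first by move=> i; case: (ord3 i) => [->|[->|->]] /=; dist.
split; first by move=> i; case: (ord3 i) => [->|[->|->]] /=; dist.
apply/setP => sig; apply/idP/idP; last first.
  rewrite cycE !in_setU => /orP[/orP[/orP[]|]|].
  - by rewrite !inE => /orP[]/eqP ->; apply: HL3.
  - rewrite !inE => /orP[/orP[/orP[/orP[/orP[]|]|]|]|] /eqP ->; inL6 HL2 t01 t12 t23 t30 T1 T2.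
  - case/imsetP => tau; rewrite !inE => /orP[/orP[/orP[/orP[/orP[]|]|]|]|] /eqP -> ->;
    inL6 HL2 t01 t12 t23 t30 T1 T2.
  - case/imsetP => tau; rewrite !inE => /orP[/orP[/orP[/orP[/orP[]|]|]|]|] /eqP -> ->;
    inL6 HL2 t01 t12 t23 t30 T1 T2.
move=> sL.
set tau := sig :\ a1 :\ a3.
have tsub : tau \subset [set s; a0; a2].
  apply/subsetP => x; rewrite !inE => /andP[x3 /andP[x1 _]]; move: (allV x); rewrite /V !inE.
  move=> /orP[/orP[/orP[/orP[]|]|]|] /eqP e; subst x; rewrite ?eqxx ?orbT //; by move: x1 x3; dist.
have tsig : tau \subset sig by apply/subsetP => x; rewrite !inE => /andP[_ /andP[_ ->]].
have tnT : ~~ ([set s; a0; a2] \subset tau).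
  apply/negP => h; move/negP: nS02; apply; apply: (HL2 _ _ sL); last by ne.
  exact: (subset_trans h tsig).
rewrite !in_setU.
case h1 : (a1 \in sig); case h3 : (a3 \in sig).
- exfalso; move/negP: n13; apply; apply: (HL2 _ _ sL); last by ne.
  by apply/subsetP => x; rewrite !inE => /orP[]/eqP ->.
- case: (eqVneq tau set0) => t0.
    have -> : sig = [set a1]; last by rewrite !inE eqxx.
    apply/setP => x; rewrite inE; apply/idP/eqP => [xs|->//].
    apply/eqP; apply: contraT => xa1.
    have xa3 : x != a3 by apply/eqP => e; rewrite e h3 in xs.
    have : x \in tau by rewrite /tau !inE xa1 xa3 xs.
    by rewrite t0 inE.
  have tC : tau \in cycle_cx c by rewrite cycE; apply: sub3.
  have hI : sig \in [set a1 |: x | x in cycle_cx c].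
    apply/imsetP; exists tau => //; apply/setP => x; rewrite /tau !inE.
    case: (eqVneq x a1) => [->|xa1] /=; first by rewrite h1.
    case: (eqVneq x a3) => [->|xa3] //=; by rewrite h3.
  by rewrite hI ?orbT.
- case: (eqVneq tau set0) => t0.
    have -> : sig = [set a3]; last by rewrite !inE eqxx ?orbT.
    apply/setP => x; rewrite inE; apply/idP/eqP => [xs|->//].
    apply/eqP; apply: contraT => xa3.
    have xa1 : x != a1 by apply/eqP => e; rewrite e h1 in xs.
    have : x \in tau by rewrite /tau !inE xa1 xa3 xs.
    by rewrite t0 inE.
  have tC : tau \in cycle_cx c by rewrite cycE; apply: sub3.
  have hI : sig \in [set a3 |: x | x in cycle_cx c].
    apply/imsetP; exists tau => //; apply/setP => x; rewrite /tau !inE.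
    case: (eqVneq x a3) => [->|xa3] /=; first by rewrite h3.
    case: (eqVneq x a1) => [->|xa1] //=; by rewrite h1.
  by rewrite hI ?orbT.
- have Est : sig = tau.
    apply/setP => x; rewrite /tau !inE.
    case: (eqVneq x a3) => [->|xa3] /=; first by rewrite h3.
    case: (eqVneq x a1) => [->|xa1] //=; by rewrite h1.
  have hC : sig \in cycle_cx c.
    rewrite Est cycE; apply: sub3 => //; rewrite -Est; exact: HL1.
  by move: hC; rewrite /cycle_cx in_setU => /orP[] ->; rewrite ?orbT.
Qed.
End Four.

Lemma four_full (S : finType) (M : S -> S -> nat) (L : {set {set S}}) (s a0 a1 a2 a3 : S) :
  coxeter_matrix M -> is_nerve M L -> tri_S2 L -> ~ is_suspension_ngon 3 L ->
  uniq [:: a0; a1; a2; a3] ->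
  link L s = [set [set a0]; [set a1]; [set a2]; [set a3];
                    [set a0; a1]; [set a1; a2]; [set a2; a3]; [set a3; a0]] ->
  M a0 a1 = 2%N -> M a1 a2 = 2%N -> M a2 a3 = 2%N -> M a3 a0 = 2%N ->
  full L (link L s).
Proof.
move=> HM HN HL nS U HE m01 m12 m23 m30.
have c02 := four_core HM HN HL nS U HE m01 m12 m23 m30.
have [d01 d02 d03 d12 [d13 d23]] := uniq4 U.
have U' : uniq [:: a1; a2; a3; a0].
  by rewrite /= !inE; dist.
have HE' : link L s = [set [set a1]; [set a2]; [set a3]; [set a0];
                    [set a1; a2]; [set a2; a3]; [set a3; a0]; [set a0; a1]].
  by rewrite HE; setperm.
have c13 := four_core HM HN HL nS U' HE' m12 m23 m30 m01.
have [HL1 [HL2 [HL3 [HL4 [HL5 _]]]]] := HL.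
have inHE (x : {set S}) : x \in [set [set a0]; [set a1]; [set a2]; [set a3];
                    [set a0; a1]; [set a1; a2]; [set a2; a3]; [set a3; a0]] -> x \in link L s.
  by rewrite HE.
have sa (a : S) : [set a] \in link L s -> s != a.
  by rewrite (link1 HL2 HL3) eq_sym => /andP[].
have ss0 : s != a0 by apply: sa; apply: inHE; rewrite !inE eqxx ?orbT.
have ss1 : s != a1 by apply: sa; apply: inHE; rewrite !inE eqxx ?orbT.
have ss2 : s != a2 by apply: sa; apply: inHE; rewrite !inE eqxx ?orbT.
have ss3 : s != a3 by apply: sa; apply: inHE; rewrite !inE eqxx ?orbT.
have t01 : s |: [set a0; a1] \in L.
  by rewrite setUA -(link2 HL2 ss0 ss1); apply: inHE; rewrite !inE eqxx ?orbT.
have t12 : s |: [set a1; a2] \in L.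
  by rewrite setUA -(link2 HL2 ss1 ss2); apply: inHE; rewrite !inE eqxx ?orbT.
have t23 : s |: [set a2; a3] \in L.
  by rewrite setUA -(link2 HL2 ss2 ss3); apply: inHE; rewrite !inE eqxx ?orbT.
have t30 : s |: [set a3; a0] \in L.
  by rewrite setUA -(link2 HL2 ss3 ss0); apply: inHE; rewrite !inE eqxx ?orbT.
move=> sig sL sub.
have cv x : x \in sig -> x \in [set a0; a1; a2; a3].
  move=> xs; move: (subsetP sub x xs); rewrite /cvertices inE HE !inE.
  move=> /orP[/orP[/orP[/orP[/orP[/orP[/orP[]|]|]|]|]|]|] /eqP.
  1-4: by move/set1_inj ->; rewrite eqxx ?orbT.
  1-4: by move/set1_eq2/eqP; dist.
have sns : s \notin sig.
  by apply/negP => /cv; dist.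
have viaP (P : {set S}) : sig \subset P -> s |: P \in L -> sig \in link L s.
  move=> sP PL; rewrite (mem_link HL2) sL sns /=; apply: (HL2 _ _ PL); first by apply: setUS.
  by apply/set0Pn; exists s; rewrite setU11.
have diag (a b : S) : a \in sig -> b \in sig -> [set a; b] \in L.
  move=> ha hb; apply: (HL2 _ _ sL); last by apply/set0Pn; exists a; rewrite !inE eqxx.
  by apply/subsetP => x; rewrite !inE => /orP[]/eqP ->.
have subE (a b : S) : (forall x, x \in sig -> x != a -> x != b -> False) ->
    sig \subset [set a; b].
  move=> H; apply/subsetP => x xs; rewrite !inE.
  case: (eqVneq x a) => // xa; case: (eqVneq x b) => // xb.
  by case: (H x xs xa xb).
case h0 : (a0 \in sig); case h2 : (a2 \in sig).
- by move: c02; rewrite diag.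
- case h1 : (a1 \in sig); case h3 : (a3 \in sig).
  + by move: c13; rewrite diag.
  + apply: (viaP [set a0; a1]) => //; apply: subE => x xs xa xb; move: (cv x xs); rewrite !inE => /orP[/orP[/orP[]|]|] /eqP e; subst x;
      move: xs xa xb; rewrite ?h0 ?h1 ?h2 ?h3 ?eqxx //=.
  + apply: (viaP [set a3; a0]) => //; apply: subE => x xs xa xb; move: (cv x xs); rewrite !inE => /orP[/orP[/orP[]|]|] /eqP e; subst x;
      move: xs xa xb; rewrite ?h0 ?h1 ?h2 ?h3 ?eqxx //=.
  + apply: (viaP [set a0; a1]) => //; apply: subE => x xs xa xb; move: (cv x xs); rewrite !inE => /orP[/orP[/orP[]|]|] /eqP e; subst x;
      move: xs xa xb; rewrite ?h0 ?h1 ?h2 ?h3 ?eqxx //=.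
- case h1 : (a1 \in sig); case h3 : (a3 \in sig).
  + by move: c13; rewrite diag.
  + apply: (viaP [set a1; a2]) => //; apply: subE => x xs xa xb; move: (cv x xs); rewrite !inE => /orP[/orP[/orP[]|]|] /eqP e; subst x;
      move: xs xa xb; rewrite ?h0 ?h1 ?h2 ?h3 ?eqxx //=.
  + apply: (viaP [set a2; a3]) => //; apply: subE => x xs xa xb; move: (cv x xs); rewrite !inE => /orP[/orP[/orP[]|]|] /eqP e; subst x;
      move: xs xa xb; rewrite ?h0 ?h1 ?h2 ?h3 ?eqxx //=.
  + apply: (viaP [set a2; a3]) => //; apply: subE => x xs xa xb; move: (cv x xs); rewrite !inE => /orP[/orP[/orP[]|]|] /eqP e; subst x;
      move: xs xa xb; rewrite ?h0 ?h1 ?h2 ?h3 ?eqxx //=.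
- case h1 : (a1 \in sig); case h3 : (a3 \in sig).
  + by move: c13; rewrite diag.
  + apply: (viaP [set a0; a1]) => //; apply: subE => x xs xa xb; move: (cv x xs); rewrite !inE => /orP[/orP[/orP[]|]|] /eqP e; subst x;
      move: xs xa xb; rewrite ?h0 ?h1 ?h2 ?h3 ?eqxx //=.
  + apply: (viaP [set a2; a3]) => //; apply: subE => x xs xa xb; move: (cv x xs); rewrite !inE => /orP[/orP[/orP[]|]|] /eqP e; subst x;
      move: xs xa xb; rewrite ?h0 ?h1 ?h2 ?h3 ?eqxx //=.
  + apply: (viaP [set a0; a1]) => //; apply: subE => x xs xa xb; move: (cv x xs); rewrite !inE => /orP[/orP[/orP[]|]|] /eqP e; subst x;
      move: xs xa xb; rewrite ?h0 ?h1 ?h2 ?h3 ?eqxx //=.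
Qed.

Unset Implicit Arguments.

Theorem mainTheorem3 (S : finType) (M : S -> S -> nat) (L : {set {set S}}) (s : S) :
  coxeter_matrix M -> is_nerve M L ->
  tri_S2 L -> ~ is_boundary_3simplex L ->
  euclidean M L s ->
  (three_euclidean M L s -> full L (link L s) /\ full L (star L s)) /\
  (four_euclidean M L s -> ~ is_suspension_ngon 3 L ->
     full L (link L s) /\ full L (star L s)).
Proof.
move=> HM HN HL nB _; split.
  move=> [v3 _]; have F := three_full HL nB v3.
  by split; [exact: F | exact: full_star F].
move=> [_ [a0 [a1 [a2 [a3 [U [HE [m01 [m12 [m23 m30]]]]]]]]]] nS.
have F := four_full HM HN HL nS U HE m01 m12 m23 m30.
by split; [exact: F | exact: full_star F].
Qed.
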